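(* For every positive integer $\alpha$: there is no function $f$ such that $\mathrm{stcw}(G)\le f(\mathrm{ecrw}_\alpha(G))$ for all graphs $G$, and there is no function $f$ such that $\mathrm{tcw}(G)\le f(\mathrm{ecrw}_\alpha(G))$ for all graphs $G$.
   Context: A tree-cut decomposition of a graph $G$ is a pair $\mathcal{T}=(T,\{X_t\}_{t\in V(T)})$ where $T$ is a tree and the bags $X_t\subseteq V(G)$ are pairwise disjoint (possibly empty) with $\bigcup_{t\in V(T)}X_t=V(G)$. For a node $t$ of $T$, let $T_1,\dots,T_m$ be the connected components of $T-t$ and $Z_i=\bigcup_{s\in V(T_i)}X_s$; $\mathrm{cross}_{\mathcal{T}}(t)$ is the number of edges of $G$ whose two endpoints lie in two distinct sets among $Z_1,\dots,Z_m$ (if $T$ has one node, $\mathrm{cross}_{\mathcal T}(t)=0$). The crossing number of $\mathcal{T}$ is $\max_{t}\mathrm{cross}_{\mathcal{T}}(t)$, and the thickness of $\mathcal{T}$ is $\max_t|X_t|$. $\mathrm{ecrw}_\alpha(G)$ is the minimum crossing number over tree-cut decompositions of $G$ of thickness at most $\alpha$. For an edge $uv$ of $T$, the adhesion $\mathrm{adh}_{\mathcal T}(uv)$ is the set of edges of $G$ joining $\bigcup_{s\in V(T_{uv,u})}X_s$ and $\bigcup_{s\in V(T_{uv,v})}X_s$, where $T_{uv,u},T_{uv,v}$ are the components of $T-uv$ containing $u,v$. The torso $H_t$ at $t$ is $G$ if $|V(T)|=1$, and otherwise is obtained from $G$ by consolidating each $Z_i$ into a single vertex $z_i$ (replace $Z_i$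 by $z_i$ and, for each edge between $Z_i$ and $v\notin Z_i$, add an edge $z_iv$; multi-edges allowed). The 3-center $\widetilde{H_t}$ is obtained from $H_t$ by exhaustively suppressing vertices of $V(H_t)\setminus X_t$ of degree at most 2 (suppressing $v$: delete $v$, and if it had degree exactly 2 add an edge between its two neighbours). The 2-center $\widehat{H_t}$ is obtained from $H_t$ by removing the vertices of $V(H_t)\setminus X_t$ of degree 1 in $H_t$. The tree-cut width of $\mathcal T$ is $\max(\max_{uv\in E(T)}|\mathrm{adh}_{\mathcal T}(uv)|,\max_{t}|V(\widetilde{H_t})|)$ and the slim tree-cut width of $\mathcal T$ is $\max(\max_{uv\in E(T)}|\mathrm{adh}_{\mathcal T}(uv)|,\max_{t}|V(\widehat{H_t})|)$; $\mathrm{tcw}(G)$ and $\mathrm{stcw}(G)$ are the respective minima over all tree-cut decompositions of $G$. *)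

(* Defs.v *)
From mathcomp Require Import all_boot.
Set Implicit Arguments. Unset Strict Implicit. Unset Printing Implicit Defensive.

Section Defs.

Definition simple_graph (V : finType) (e : rel V) : Prop :=
  symmetric e /\ irreflexive e.

(* A (finite, nonempty) tree on node type N with adjacency tadj:
   symmetric, irreflexive, connected, with |E| = |N| - 1
   (ordered adjacent pairs counted, hence the doubling). *)
Definition is_tree (N : finType) (tadj : rel N) : Prop :=
  [/\ symmetric tadj, irreflexive tadj, 0 < #|N|,
      (forall x y, connect tadj x y) &
      #|[set p : N * N | tadj p.1 p.2]| = (#|N|).-1.*2 ].

(* A tree-cut decomposition of G = (V,e) is a tree (N,tadj) together with
   a map phi : V -> N; the bag X_t is phi^-1(t).  Bags are then pairwise
   disjoint, possibly empty, and cover V. *)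
Definition tree_cut_dec (V N : finType) (tadj : rel N) (phi : V -> N) : Prop :=
  is_tree tadj.

Variables (V N : finType) (e : rel V) (tadj : rel N) (phi : V -> N).

Definition bag (t : N) : {set V} := [set v | phi v == t].

Definition del_node (t : N) : rel N :=
  fun x y => [&& tadj x y, x != t & y != t].

(* cross_T(t): edges of G whose endpoints lie in two distinct components of
   T - t (ordered pairs counted, then halved). *)
Definition cross (t : N) : nat :=
  #|[set p : V * V | [&& e p.1 p.2, phi p.1 != t, phi p.2 != t &
                        ~~ connect (del_node t) (phi p.1) (phi p.2)]]| %/ 2.

Definition thickness_le (alpha : nat) : Prop := forall t, #|bag t| <= alpha.
Definition crossing_le (k : nat) : Prop := forall t, cross t <= k.

Definition del_edge (u v : N) : rel N :=
  fun x y => tadj x y && ~~ (((x == u) && (y == v)) || ((x == v) && (y == u))).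

Definition adh (u v : N) : nat :=
  #|[set p : V * V | [&& e p.1 p.2, connect (del_edge u v) u (phi p.1) &
                        connect (del_edge u v) v (phi p.2)]]|.

(* Vertex type of the torso at t: inl x for x in X_t, inr s for each
   neighbour s of t in T (s represents the component Z_s of T - t
   containing s, which becomes the consolidated vertex z_s). *)
Definition TV := (V + N)%type.

Definition belongs (t : N) (x : V) (a : TV) : bool :=
  match a with
  | inl u => (phi x == t) && (x == u)
  | inr s => [&& tadj t s, phi x != t & connect (del_node t) s (phi x)]
  end.

End Defs.

(* A multigraph: alive vertex set and a symmetric multiplicity function
   (mult a a = number of loops at a). *)
Record mgraph (W : finType) := MG { alive : {set W}; mult : W -> W -> nat }.

Definition deg (W : finType) (M : mgraph W) (a : W) : nat :=
  \sum_(b : W) mult M a b + mult M a a.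

(* suppression of vertex v: delete v; if deg v = 2, add an edge between its
   two neighbours (a loop if both edges go to the same neighbour). *)
Definition suppress (W : finType) (M : mgraph W) (v : W) : mgraph W :=
  MG (alive M :\ v)
     (fun a b => if (a == v) || (b == v) then 0 else
        mult M a b +
        ((deg M v == 2) &&
         (if a == b then mult M v a == 2
          else (mult M v a == 1) && (mult M v b == 1)))).

Definition suppressible (W : finType) (keep : {set W}) (M : mgraph W) (v : W) :=
  [&& v \in alive M, v \notin keep & deg M v <= 2].

(* reduces keep M n: some exhaustive sequence of suppressions of
   vertices outside keep, applied to M, ends with a multigraph on n vertices *)
Inductive reduces (W : finType) (keep : {set W}) : mgraph W -> nat -> Prop :=
  | red_stop M : (forall v, ~~ suppressible keep M v) -> reduces keep M #|alive M|
  | red_step M v n : suppressible keep M v -> reduces keep (suppress M v) n ->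
                     reduces keep M n.

Section Torso.
Variables (V N : finType) (e : rel V) (tadj : rel N) (phi : V -> N).

(* The torso H_t (if T has one node, this is G itself). *)
Definition torso (t : N) : mgraph (TV V N) :=
  MG ([set a : TV V N | match a with inl u => phi u == t
                                    | inr s => tadj t s end])
     (fun a b => if a == b then 0 else
        #|[set p : V * V | [&& e p.1 p.2, belongs tadj phi t p.1 a &
                               belongs tadj phi t p.2 b]]|).

Definition keepX : {set TV V N} := [set a | if a is inl _ then true else false].

(* size of the 2-center: remove vertices outside X_t of degree 1 in H_t *)
Definition two_center_size (t : N) : nat :=
  #|[set a in alive (torso t) | (a \in keepX) || (deg (torso t) a != 1)]|.

(* tree-cut width of the decomposition is <= w (the 3-center is the result
   of an exhaustive suppression sequence) *)
Definition tcw_dec_le (w : nat) : Prop :=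
  (forall u v, tadj u v -> adh e tadj phi u v <= w) /\
  (forall t, exists n, reduces keepX (torso t) n /\ n <= w).

Definition stcw_dec_le (w : nat) : Prop :=
  (forall u v, tadj u v -> adh e tadj phi u v <= w) /\
  (forall t, two_center_size t <= w).

End Torso.

Definition ecrw_le (alpha : nat) (V : finType) (e : rel V) (k : nat) : Prop :=
  exists (N : finType) (tadj : rel N) (phi : V -> N),
    [/\ tree_cut_dec tadj phi, thickness_le phi alpha & crossing_le e tadj phi k].

Definition is_ecrw (alpha : nat) (V : finType) (e : rel V) (k : nat) : Prop :=
  ecrw_le alpha e k /\ forall k', ecrw_le alpha e k' -> k <= k'.

Definition tcw_le (V : finType) (e : rel V) (w : nat) : Prop :=
  exists (N : finType) (tadj : rel N) (phi : V -> N),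
    tree_cut_dec tadj phi /\ tcw_dec_le e tadj phi w.

Definition is_tcw (V : finType) (e : rel V) (w : nat) : Prop :=
  tcw_le e w /\ forall w', tcw_le e w' -> w <= w'.

Definition stcw_le (V : finType) (e : rel V) (w : nat) : Prop :=
  exists (N : finType) (tadj : rel N) (phi : V -> N),
    tree_cut_dec tadj phi /\ stcw_dec_le e tadj phi w.

Definition is_stcw (V : finType) (e : rel V) (w : nat) : Prop :=
  stcw_le e w /\ forall w', stcw_le e w' -> w <= w'.

(* Main.v *)
Require Import Defs.
From mathcomp Require Import all_boot zify.
From Stdlib Require Import Classical.
Set Implicit Arguments. Unset Strict Implicit. Unset Printing Implicit Defensive.


Lemma exists_min (P : nat -> Prop) : (exists n, P n) -> exists k, P k /\ forall k', P k' -> k <= k'.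
Proof.
case=> n; elim: n {-2}n (leqnn n) => [|m IH] n Hn Pn.
  exists n; split=> // k' _; move: Hn; rewrite leqn0 => /eqP ->.
  done.
case: (classic (exists k', P k' /\ k' < n)) => [[k' [Pk' lt]]|H].
  by apply: (IH k') => //; rewrite -ltnS (leq_trans lt Hn).
exists n; split=> // k' Pk'; rewrite leqNgt; apply/negP => lt; apply: H; by exists k'.
Qed.

Lemma reduces_ex (W : finType) (keep : {set W}) : forall m (M : mgraph W), #|alive M| <= m ->
  exists n, reduces keep M n /\ n <= #|alive M|.
Proof.
elim=> [|m IH] M HM.
  exists #|alive M|; split=> //; apply: red_stop => v; apply/negP; case/and3P => va.
  by move: HM; rewrite leqn0 cards_eq0 => /eqP E; rewrite E inE in va.
case: (pickP (suppressible keep M)) => [v Hv|H]; last first.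
  by exists #|alive M|; split=> //; apply: red_stop => v; rewrite H.
have va : v \in alive M by case/and3P: Hv.
have Hc : #|alive (suppress M v)| < #|alive M| by rewrite /= (cardsD1 v (alive M)) va.
case: (IH (suppress M v)) => [|n [Hr Hn]]; first by rewrite -ltnS (leq_trans Hc HM).
exists n; split; first exact: red_step Hr.
by rewrite (leq_trans Hn) // ltnW.
Qed.

Lemma red_lb (W : finType) (keep : {set W}) M n (S : {set W}) :
  reduces keep M n -> S \subset alive M ->
  (forall a, a \in S -> (a \in keep) || (2 < deg M a)) ->
  (forall a b, a \notin S -> mult M a b = 0 /\ mult M b a = 0) -> #|S| <= n.
Proof.
elim=> {M n} [M _|M v n Hv _ IH] sS Sdeg S0; first exact: subset_leq_card.
case/and3P: Hv => va vk vd.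
have vS : v \notin S.
  apply/negP => /Sdeg; rewrite (negbTE vk) /=; by rewrite ltnNge vd.
have dv : deg M v = 0.
  rewrite /deg big1 ?(S0 v v vS).1 // => b _; exact: (S0 v b vS).1.
have Em : forall a b, mult (suppress M v) a b = mult M a b.
  move=> a b /=; rewrite dv /=; case: eqP => [->|_] /=; first by rewrite (S0 v b vS).1.
  case: eqP => [->|_] /=; first by rewrite (S0 v a vS).2.
  by rewrite addn0.
have Ed : forall a, deg (suppress M v) a = deg M a.
  by move=> a; rewrite /deg Em; apply: congr2 => //; apply: eq_bigr => b _; rewrite Em.
apply: IH.
- apply/subsetP => a aS /=; rewrite !inE (subsetP sS a aS) andbT.
  by apply: contraNneq vS => <-.
- by move=> a; rewrite Ed; apply: Sdeg.
- by move=> a b aS; rewrite !Em; apply: S0.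
Qed.


Lemma path_del (N : finType) (tadj : rel N) t s q :
  path tadj s q -> t \notin s :: q -> path (del_node tadj t) s q.
Proof.
elim: q s => [|y q IH] s //= /andP [Hs Hp]; rewrite !inE !negb_or => /and3P [ts ty tq].
rewrite /del_node Hs (IH y Hp) ?inE ?negb_or ?ty //.
by rewrite eq_sym ts eq_sym ty.
Qed.

Lemma exists_branch (N : finType) (tadj : rel N) t u :
  connect tadj t u -> u != t -> exists s, tadj t s /\ connect (del_node tadj t) s u.
Proof.
case/connectP=> p pth ->; case: (shortenP pth) => p' pth' up' _.
case: p' pth' up' => [|s q] /=; first by rewrite eqxx.
case/andP=> ts pq; rewrite inE negb_or => /andP [/andP [tns tq] _] _.
exists s; split=> //; apply/connectP; exists q => //.
by apply: path_del; rewrite // inE negb_or tns.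
Qed.


Notation GV n := (option ('I_n * 'I_3)).

Definition ge (n : nat) : rel (GV n) := fun x y =>
  match x, y with
  | None, Some _ => true
  | Some _, None => true
  | Some p, Some q => (p.1 == q.1) && (p.2 != q.2)
  | None, None => false
  end.

Lemma ge_sym n : symmetric (@ge n).
Proof. by case=> [[i k]|] [[j l]|] //=; rewrite eq_sym [l == k]eq_sym. Qed.

Lemma ge_simple n : simple_graph (@ge n).
Proof. split; first exact: ge_sym. by case=> [[i k]|] //=; rewrite !eqxx. Qed.

Lemma card_GV n : #|{: GV n}| = (3 * n).+1.
Proof. by rewrite card_option card_prod !card_ord mulnC. Qed.


Lemma card_bigcup_le (I T : finType) (F : I -> {set T}) :
  #|\bigcup_i F i| <= \sum_i #|F i|.
Proof.
elim/big_rec2: _ => [|i A n _ IH]; first by rewrite cards0.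
by apply: leq_trans (leq_card_setU _ _) _; rewrite leq_add2l.
Qed.

Lemma mates (k : 'I_3) : exists k1 k2 : 'I_3, [/\ k1 != k, k2 != k & k1 != k2].
Proof.
case: k => [[|[|[|//]]] Hk].
- by exists (inord 1), (inord 2); split; apply/eqP; move/(congr1 val); rewrite /= !inordK.
- by exists (inord 0), (inord 2); split; apply/eqP; move/(congr1 val); rewrite /= !inordK.
- by exists (inord 0), (inord 1); split; apply/eqP; move/(congr1 val); rewrite /= !inordK.
Qed.

Section Lower.
Variables (n : nat) (N : finType) (tadj : rel N) (phi : GV n -> N).
Hypothesis Htree : is_tree tadj.

Definition t0 := phi None.
Definition bl (x : GV n) (a : TV (GV n) N) := belongs tadj phi t0 x a.

Arguments bl : simpl never.

Lemma bl_None s : bl None (inr s) = false.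
Proof. by rewrite /bl /= /t0 eqxx andbF. Qed.

Lemma find_vertex x : exists b, bl x b.
Proof.
case: (eqVneq (phi x) t0) => [E|ne].
  by exists (inl x); rewrite /bl /= E !eqxx.
case: Htree => _ _ _ Hc _.
case: (exists_branch (Hc t0 (phi x)) ne) => s [ts cs].
by exists (inr s); rewrite /bl /= ts ne cs.
Qed.

Definition torso0 := torso (@ge n) tadj phi t0.

Lemma deg3 s x : bl x (inr s) -> 2 < deg torso0 (inr s).
Proof.
move=> bx.
set Out := [set p : GV n * GV n | [&& ge p.1 p.2, bl p.1 (inr s) & ~~ bl p.2 (inr s)]].
pose Q b := if inr s == b then set0 else
   [set p : GV n * GV n | [&& ge p.1 p.2, bl p.1 (inr s) & bl p.2 b]].
have H1 : #|Out| <= \sum_b mult torso0 (inr s) b.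
  have sub : Out \subset \bigcup_b Q b.
    apply/subsetP=> p; rewrite inE => /and3P [gp b1 b2].
    case: (find_vertex p.2) => b bb.
    apply/bigcupP; exists b => //; rewrite /Q.
    case: eqP => [E|_]; first by move: bb; rewrite -E (negbTE b2).
    by rewrite inE gp b1 bb.
  apply: leq_trans (subset_leq_card sub) _.
  apply: leq_trans (card_bigcup_le _) _.
  rewrite leq_eqVlt; apply/orP; left; apply/eqP; apply: eq_bigr => b _.
  by rewrite /Q /torso0 /=; case: eqP => _; rewrite ?cards0.
have H2 : 2 < #|Out|.
  case: x bx => [[i k]|]; last by rewrite bl_None.
  move=> bx.
  case: (mates k) => k1 [k2 [h1 h2 h3]].
  pose x := Some (i, k) : GV n.
  pose q y := if bl y (inr s) then (y, None) else (x, y).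
  have sub : [:: (x, None); q (Some (i, k1)); q (Some (i, k2))] \subset Out.
    apply/subsetP=> p; rewrite !inE; case/or3P => /eqP ->; rewrite /q ?inE /= ?bx ?bl_None //.
      by case: ifP => b1; rewrite /= ?bl_None ?b1 ?bx ?eqxx //= eq_sym h1.
    by case: ifP => b1; rewrite /= ?bl_None ?b1 ?bx ?eqxx //= eq_sym h2.
  apply: leq_trans (subset_leq_card sub); rewrite (card_uniqP _).
    by [].
  rewrite /= !inE /q !andbT.
  by case: ifP => b1; case: ifP => b2; rewrite !xpair_eqE /= /x ?(inj_eq (@Some_inj _)) ?xpair_eqE ?eqxx /= ?andbT ?andbF ?orbF ?(eq_sym k) ?(eq_sym k2 k1) ?(negbTE h1) ?(negbTE h2) ?(negbTE h3).
apply: leq_trans H2 (leq_trans H1 _); rewrite /deg; exact: leq_addr.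
Qed.


Lemma bl_inl x u : bl x (inl u) = (phi x == t0) && (x == u).
Proof. by []. Qed.

Definition Sset : {set TV (GV n) N} := [set a | match a with
   inl u => phi u == t0 | inr s => tadj t0 s && [exists x, bl x (inr s)] end].

Lemma Sset_alive : Sset \subset alive torso0.
Proof. by apply/subsetP=> [[u|s]]; rewrite !inE // => /andP []. Qed.

Lemma Sset_deg a : a \in Sset -> (a \in keepX (GV n) N) || (2 < deg torso0 a).
Proof.
case: a => [u|s]; rewrite !inE //= => /andP [_ /existsP [x bx]].
exact: deg3 bx.
Qed.

Lemma Sset_bl a x : a \notin Sset -> bl x a = false.
Proof.
case: a => [u|s]; rewrite inE.
  rewrite bl_inl; apply: contraNF => /andP [/eqP <- /eqP ->]; exact: eqxx.
rewrite negb_and => /orP [ns|].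
  by rewrite /bl /= (negbTE ns).
by apply: contraNF => bx; apply/existsP; exists x.
Qed.

Lemma Sset_out a b : a \notin Sset -> mult torso0 a b = 0 /\ mult torso0 b a = 0.
Proof.
move=> aS; split; rewrite /= /torso0 /=; case: eqP => // _; apply/eqP; rewrite cards_eq0;
 apply/eqP/setP => p; rewrite !inE; apply/negbTE;
 rewrite -?/(bl p.1 a) -?/(bl p.2 a) ?(Sset_bl p.1 aS) ?(Sset_bl p.2 aS) ?andbF //.
Qed.

Lemma card_bigcup_in (I T : finType) (P : {pred I}) (F : I -> {set T}) :
  #|\bigcup_(i in P) F i| <= \sum_(i in P) #|F i|.
Proof.
elim/big_rec2: _ => [|i A m _ IH]; first by rewrite cards0.
by apply: leq_trans (leq_card_setU _ _) _; rewrite leq_add2l.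
Qed.

Lemma count_bound w : (forall u v, tadj u v -> adh (@ge n) tadj phi u v <= w) ->
  #|Sset| <= w -> (3 * n).+1 <= w + w * w.
Proof.
move=> Hadh HS.
pose X := [set x : GV n | phi x == t0].
pose Sn := [set s | tadj t0 s && [exists x, bl x (inr s)]].
pose Z s := [set x : GV n | bl x (inr s)].
have cover : [set: GV n] \subset X :|: \bigcup_(s in Sn) Z s.
  apply/subsetP => x _; rewrite !inE; case: eqP => //= ne.
  case: Htree => _ _ _ Hc _.
  have ne' : phi x != t0 by apply/eqP.
  case: (exists_branch (Hc t0 (phi x)) ne') => s [ts cs].
  have bx : bl x (inr s) by rewrite /bl /= ts ne' cs.
  by apply/bigcupP; exists s; rewrite !inE ?ts ?bx //=; apply/existsP; exists x.
have HX : #|X| <= w.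
  apply: leq_trans HS; rewrite -(card_imset _ (@inl_inj _ N)).
  by apply: subset_leq_card; apply/subsetP => a /imsetP [x]; rewrite !inE => xX ->.
have HSn : #|Sn| <= w.
  apply: leq_trans HS; rewrite -(card_imset _ (@inr_inj (GV n) _)).
  by apply: subset_leq_card; apply/subsetP => a /imsetP [x]; rewrite !inE => xX ->.
have HZ : forall s, s \in Sn -> #|Z s| <= w.
  move=> s; rewrite inE => /andP [ts _].
  apply: leq_trans (Hadh _ _ ts).
  have inj : injective (fun x : GV n => ((None : GV n), x)) by move=> x y [].
  rewrite -(card_imset _ inj) /adh; apply: subset_leq_card; apply/subsetP => p /imsetP [x].
  rewrite /Z inE /bl /= => /and3P [_ ne cx] -> /=.
  have xN : x != None by apply: contraNneq ne => ->.
  rewrite inE /=; apply/and3P; split.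
  - by case: x xN {ne cx}.
  - by rewrite /t0 connect0.
  - apply: connect_sub cx => a b /and3P [ab an bn]; apply: connect1.
    by rewrite /del_edge ab /= (negbTE an) (negbTE bn) !andbF.
rewrite -card_GV -cardsT; apply: (leq_trans (subset_leq_card cover)).
apply: leq_trans (leq_card_setU _ _) _; apply: leq_add => //.
apply: leq_trans (card_bigcup_in _ _) _.
apply: (@leq_trans (\sum_(s in Sn) w)); first by apply: leq_sum => s sS; exact: HZ.
by rewrite sum_nat_const leq_mul.
Qed.

End Lower.

Lemma stcw_lb n w : stcw_le (@ge n) w -> (3 * n).+1 <= w + w * w.
Proof.
case=> N [tadj [phi [Ht [Hadh Hc]]]].
apply: (count_bound Ht Hadh); apply: leq_trans (Hc (t0 phi)).
apply: subset_leq_card; apply/subsetP => a aS.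
rewrite inE (subsetP (Sset_alive tadj phi) a aS) /=.
case/orP: (Sset_deg Ht aS) => [->//|d]; apply/orP; right.
by apply: contraTneq d => ->.
Qed.

Lemma tcw_lb n w : tcw_le (@ge n) w -> (3 * n).+1 <= w + w * w.
Proof.
case=> N [tadj [phi [Ht [Hadh Hc]]]].
apply: (count_bound Ht Hadh).
case: (Hc (t0 phi)) => m [Hr Hm]; apply: leq_trans Hm.
apply: (red_lb Hr (Sset_alive tadj phi)).
- by move=> a; apply: Sset_deg.
- by move=> a b; apply: Sset_out.
Qed.


Section Tree.
Variable n : nat.

Definition par (x : GV n) : GV n :=
  match x with
  | None => None
  | Some p => if val p.2 is j.+1 then Some (p.1, inord j) else None
  end.

Definition dep (x : GV n) : nat := if x is Some p then (val p.2).+1 else 0.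

Lemma dep_par x : x != None -> dep (par x) < dep x.
Proof.
case: x => [[i [[|j] Hj]]|] //= _.
by rewrite inordK // (ltn_trans _ Hj).
Qed.

Definition gt : rel (GV n) := fun a b =>
  ((a != None) && (b == par a)) || ((b != None) && (a == par b)).

Lemma gt_sym : symmetric gt.
Proof. by move=> a b; rewrite /gt orbC. Qed.

Lemma gt_irr : irreflexive gt.
Proof.
move=> a; rewrite /gt orbb; apply/negP => /andP [aN /eqP E].
by have := dep_par aN; rewrite -E ltnn.
Qed.

Lemma gt_par x : x != None -> gt x (par x).
Proof. by move=> xN; rewrite /gt xN eqxx. Qed.

Lemma to_root (r : rel (GV n)) x :
  (forall y, y != None -> dep y <= dep x -> r y (par y)) -> connect r x None.
Proof.
move Hm : (dep x) => m H; have {Hm} : dep x <= m by rewrite Hm.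
elim: m x H => [|m IH] x H Hm.
  by case: x Hm H.
case: (eqVneq x None) => [->|xN]; first exact: connect0.
apply: connect_trans (connect1 (H x xN Hm)) _.
apply: IH => [y yN hy|]; last by rewrite -ltnS (leq_trans (dep_par xN)).
by apply: H => //; rewrite leqW.
Qed.

Lemma gt_connect_root x : connect gt x None.
Proof. by apply: to_root => y yN _; apply: gt_par. Qed.

Lemma gt_tree : is_tree gt.
Proof.
split.
- exact: gt_sym.
- exact: gt_irr.
- by rewrite card_option.
- move=> x y; apply: connect_trans (gt_connect_root x) _.
  by rewrite (sym_connect_sym gt_sym); apply: gt_connect_root.
pose NN := [set x : GV n | x != None].
have cNN : #|NN| = #|{: GV n}|.-1.
  by rewrite -(cardsC1 (None : GV n)); apply: eq_card => x; rewrite !inE.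
have i1 : injective (fun x : GV n => (x, par x)) by move=> x y [].
have i2 : injective (fun x : GV n => (par x, x)) by move=> x y [].
have -> : [set p : GV n * GV n | gt p.1 p.2] =
          [set (x, par x) | x in NN] :|: [set (par x, x) | x in NN].
  apply/setP => [[a b]]; rewrite !inE /gt /=; apply/orP/orP.
    case=> /andP [aN /eqP ->]; [left|right]; apply/imsetP; [exists a|exists b] => //; by rewrite inE.
  case=> /imsetP [x]; rewrite inE => xN [-> ->]; [left|right]; by rewrite xN eqxx.
rewrite cardsU !card_imset // cNN.
have -> : [set (x, par x) | x in NN] :&: [set (par x, x) | x in NN] = set0.
  apply/setP => [[a b]]; rewrite !inE; apply/negbTE/negP => /andP [].
  case/imsetP => x; rewrite inE => xN [-> ->].
  case/imsetP => y; rewrite inE => yN [E1 E2].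
  have := dep_par xN; have := dep_par yN; rewrite -E1 -E2 => h1 h2.
  by have := ltn_trans h1 h2; rewrite ltnn.
by rewrite cards0 subn0 addnn.
Qed.

Lemma chain (r : rel (GV n)) (Q : pred (GV n)) x z : Q x ->
  (forall y, Q y -> y != z -> [&& Q (par y), y != None & r y (par y)]) -> connect r x z.
Proof.
move Hm : (dep x) => m Qx H; have {Hm} : dep x <= m by rewrite Hm.
elim: m x Qx => [|m IH] x Qx Hm.
  case: (eqVneq x z) => [->|xz]; first exact: connect0.
  by case/and3P: (H x Qx xz) => _ xN _; case: x xN Hm {Qx xz}.
case: (eqVneq x z) => [->|xz]; first exact: connect0.
case/and3P: (H x Qx xz) => Qp xN rx.
apply: connect_trans (connect1 rx) _.
by apply: IH => //; rewrite -ltnS (leq_trans (dep_par xN)).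
Qed.

Definition inblk i (y : GV n) := if y is Some p then p.1 == i else false.

Lemma del_sym t : symmetric (del_node gt t).
Proof. by move=> a b; rewrite /del_node gt_sym; case: (a != t); case: (b != t); rewrite ?andbF. Qed.

Lemma par_blk i y : inblk i y -> (par y == None) || inblk i (par y).
Proof. by case: y => [[i' [[|k] Hk]]|] //= /eqP ->; rewrite eqxx orbT. Qed.

Lemma L_root t i k : t != None -> ~~ inblk i t ->
  connect (del_node gt t) (Some (i, k)) None.
Proof.
move=> tN tb; apply: (chain (Q := fun y => (y == None) || inblk i y)); first by rewrite /= ?eqxx ?orbT.
move=> y /orP [/eqP ->|yb]; first by rewrite eqxx.
move=> _; have yN : y != None by case: y yb.
rewrite yN par_blk //= /del_node gt_par //=.
have yt : y != t by apply: contraNneq tb => <-.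
rewrite yt /=; case/orP: (par_blk yb) => [/eqP ->|pb]; first by rewrite eq_sym.
by apply: contraNneq tb => <-.
Qed.

Lemma L_blk t i k : ~~ inblk i t ->
  connect (del_node gt t) (Some (i, k)) (Some (i, ord0)).
Proof.
move=> tb; apply: (chain (Q := inblk i)); first by rewrite /= eqxx.
move=> [[i' [[|k'] Hk]]|] //= /eqP E.
  by case/negP; rewrite E; apply/eqP; congr (Some (_, _)); apply: val_inj.
move=> _; rewrite E eqxx /= /del_node (gt_par (x := Some (i, Ordinal Hk))) //=.
by apply/andP; split; apply: contraNneq tb => <- /=.
Qed.

End Tree.


Definition Bset n (t : GV n) : {set GV n} :=
  match t with None => [set None] | Some p => None |: [set Some (p.1, k) | k : 'I_3] end.

Lemma cardB n (t : GV n) : #|Bset t| <= 4.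
Proof.
case: t => [p|]; last by rewrite /= cards1.
rewrite /= cardsU1 -[4]/(1 + 3); apply: leq_add; first exact: leq_b1.
by apply: leq_trans (leq_imset_card _ _) _; rewrite card_ord.
Qed.

Lemma notB_conn n (t x y : GV n) : ge x y -> y != t -> x \notin Bset t ->
  connect (del_node (@gt n) t) x y.
Proof.
case: x => [[i k]|]; last by case: t => [p|] /=; rewrite !inE eqxx.
case: t => [[j l]|] /= gxy yt.
- rewrite !inE negb_or /= => nI.
  have ij : ~~ inblk i (Some (j, l) : GV n).
    apply: contraNN nI => /= /eqP E; apply/imsetP; exists k => //; by rewrite E.
  have hx := L_root k (isT : Some (j, l) != None) ij.
  case: y gxy yt => [[i' k']|] //= /andP [/eqP E _] _.
  apply: connect_trans hx _; rewrite (sym_connect_sym (@del_sym n _)).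
  by apply: L_root; rewrite -?E.
- case: y gxy yt => [[i' k']|] //= /andP [/eqP E _] _ _.
  apply: connect_trans (L_blk k (isT : ~~ inblk i (None : GV n))) _.
  by rewrite (sym_connect_sym (@del_sym n _)) -E; apply: L_blk.
Qed.

Lemma cross_le n (t : GV n) : cross (@ge n) (@gt n) id t <= 8.
Proof.
rewrite /cross; apply: leq_trans (leq_div2r 2 (_ : _ <= 16)) _ => //.
apply: leq_trans (subset_leq_card (_ : _ \subset setX (Bset t) (Bset t))) _.
  apply/subsetP => [[x y]]; rewrite !inE /= => /and4P [gxy xt yt nc].
  apply/andP; split.
    by apply: contraNT nc => xB; exact: notB_conn.
  apply: contraNT nc => yB; rewrite (sym_connect_sym (@del_sym n _)).
  by apply: notB_conn => //; rewrite ge_sym.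
by rewrite cardsX -[16]/(4 * 4); apply: leq_mul; apply: cardB.
Qed.

Lemma ecrw_ub n alpha : 0 < alpha -> ecrw_le alpha (@ge n) 8.
Proof.
move=> ha; exists (GV n), (@gt n), id; split.
- exact: gt_tree.
- move=> t; rewrite /bag.
  have -> : [set v : GV n | id v == t] = [set t] by apply/setP => v; rewrite !inE.
  by rewrite cards1.
- move=> t; exact: cross_le.
Qed.

Lemma stcw_ex n : exists w, stcw_le (@ge n) w.
Proof.
exists (#|{: GV n * GV n}| + #|{: TV (GV n) (GV n)}|).
exists (GV n), (@gt n), id; split; first exact: gt_tree.
split.
- by move=> u v _; rewrite /adh; apply: leq_trans (max_card _) (leq_addr _ _).
- by move=> t; rewrite /two_center_size; apply: leq_trans (max_card _) (leq_addl _ _).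
Qed.

Lemma tcw_ex n : exists w, tcw_le (@ge n) w.
Proof.
exists (#|{: GV n * GV n}| + #|{: TV (GV n) (GV n)}|).
exists (GV n), (@gt n), id; split; first exact: gt_tree.
split.
- by move=> u v _; rewrite /adh; apply: leq_trans (max_card _) (leq_addr _ _).
- move=> t; case: (@reduces_ex _ (keepX (GV n) (GV n)) _ (torso (@ge n) (@gt n) id t) (leqnn _)) => m [Hr Hm].
  by exists m; split; [exact: Hr | exact: leq_trans Hm (leq_trans (max_card _) (leq_addl _ _))].
Qed.

Theorem lemma3p7 (alpha : nat) (Halpha : 0 < alpha) :
  (~ exists f : nat -> nat,
       forall (V : finType) (e : rel V), simple_graph e ->
       forall k w, is_ecrw alpha e k -> is_stcw e w -> w <= f k) /\
  (~ exists f : nat -> nat,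
       forall (V : finType) (e : rel V), simple_graph e ->
       forall k w, is_ecrw alpha e k -> is_tcw e w -> w <= f k).
Proof.
split=> [[f Hf]|[f Hf]].
- pose M := \max_(j < 9) f j; pose n := M * M + M.
  have [k [Hk Hkm]] := exists_min (ex_intro _ 8 (ecrw_ub n Halpha)).
  have k9 : k < 9 by rewrite ltnS; apply: Hkm; exact: ecrw_ub.
  have [w [Hw Hwm]] := exists_min (stcw_ex n).
  have H1 := Hf _ _ (ge_simple n) k w (conj Hk Hkm) (conj Hw Hwm).
  have H2 : f k <= M := @leq_bigmax _ (fun j : 'I_9 => f j) (Ordinal k9).
  have H3 := stcw_lb Hw.
  have H4 : w <= M := leq_trans H1 H2.
  have H5 : w * w <= M * M := leq_mul H4 H4.
  rewrite /n in H3; lia.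
- pose M := \max_(j < 9) f j; pose n := M * M + M.
  have [k [Hk Hkm]] := exists_min (ex_intro _ 8 (ecrw_ub n Halpha)).
  have k9 : k < 9 by rewrite ltnS; apply: Hkm; exact: ecrw_ub.
  have [w [Hw Hwm]] := exists_min (tcw_ex n).
  have H1 := Hf _ _ (ge_simple n) k w (conj Hk Hkm) (conj Hw Hwm).
  have H2 : f k <= M := @leq_bigmax _ (fun j : 'I_9 => f j) (Ordinal k9).
  have H3 := tcw_lb Hw.
  have H4 : w <= M := leq_trans H1 H2.
  have H5 : w * w <= M * M := leq_mul H4 H4.
  rewrite /n in H3; lia.
Qed.
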